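(* Let $G$ be a simple undirected connected graph on vertices $u_1,\dots,u_n$ with Laplacian $L$, let $u_a\neq u_b$ satisfy $N(u_a)\setminus\{u_b\}=N(u_b)\setminus\{u_a\}$, let $M=(\mathbf e_a-\mathbf e_b)(\mathbf e_a-\mathbf e_b)^T$, $\alpha\in\mathbb R$ and $L^\alpha=L+\alpha M$. Suppose $L$ is almost periodic at $u_p$ with respect to a sequence $(\tau_k)$ of nonzero reals. Then: (1) if $p\in\{a,b\}$ and $2\alpha\tau_k\in\pi(2\mathbb Z+1)$ for all $k$, then $L^\alpha$ exhibits pretty good state transfer between $u_a$ and $u_b$ with respect to $(\tau_k)$; (2) if $p\notin\{a,b\}$, then $L^\alpha$ is almost periodic at $u_p$ with respect to $(\tau_k)$.
   Context: $N(u)$ is the neighbourhood of $u$; $L=D-A$; $\mathbf e_j$ is the standard basis vector of $u_j$. For a real symmetric $H$, $U_H(t)=\exp(-itH)$. $H$ exhibits pretty good state transfer between distinct $u_p,u_q$ with respect to a real sequence $(\tau_k)$ if $\lim_{k\to\infty}U_H(\tau_k)\mathbf e_p=\gamma\mathbf e_q$ for some $\gamma\in\mathbb C$; $H$ is almost periodic at $u_p$ with respect to a sequence $(\tau_k)$ of nonzero reals if $\lim_{k\to\infty}U_H(\tau_k)\mathbf e_p=\gamma\mathbf e_p$ for some $\gamma\in\mathbb C$. *)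

(* Defs.v *)
From HB Require Import structures.
From mathcomp Require Import all_boot all_order all_algebra.
From mathcomp Require Export complex.
From mathcomp Require Import all_classical all_reals.
From mathcomp Require Export trigo.

Set Implicit Arguments.
Unset Strict Implicit.
Unset Printing Implicit Defensive.

Import Order.TTheory GRing.Theory Num.Theory.
Local Open Scope complex_scope.
Local Open Scope ring_scope.

Section GraphQuantum.
Variable R : realType.

Definition ebasis (K : pzRingType) (n : nat) (j : 'I_n) : 'cV[K]_n := delta_mx j 0.

Definition simple_graph (n : nat) (adj : rel 'I_n) : Prop :=
  (forall i j, adj i j = adj j i) /\ (forall i, adj i i = false).

Definition connected_graph (n : nat) (adj : rel 'I_n) : Prop :=
  forall i j, connect adj i j.

Definition nbhd (n : nat) (adj : rel 'I_n) (u : 'I_n) : {set 'I_n} :=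
  [set w | adj u w].

Definition laplacian (n : nat) (adj : rel 'I_n) : 'M[R]_n :=
  \matrix_(i, j) ((i == j)%:R * #|nbhd adj i|%:R - (adj i j)%:R).

Definition mx_cvg (m n : nat) (u : nat -> 'M[R[i]]_(m, n)) (l : 'M[R[i]]_(m, n)) : Prop :=
  forall e : R, 0 < e -> exists N : nat, forall k : nat, (N <= k)%N ->
    forall i j, `|u k i j - l i j| < e%:C.

Definition expmx (n : nat) (A : 'M[R[i]]_n) : 'M[R[i]]_n :=
  xget 0 (fun E => mx_cvg (fun N => \sum_(k < N) ((k`!)%:R)^-1 *: A ^+ k) E).

Definition evol (n : nat) (H : 'M[R]_n) (t : R) : 'M[R[i]]_n :=
  expmx ((- 'i%C * t%:C) *: map_mx (fun x : R => x%:C) H).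

Definition pgst (n : nat) (H : 'M[R]_n) (p q : 'I_n) (tau : nat -> R) : Prop :=
  p != q /\
  exists gamma : R[i],
    mx_cvg (fun k => evol H (tau k) *m ebasis _ p) (gamma *: ebasis _ q).

Definition almost_periodic (n : nat) (H : 'M[R]_n) (p : 'I_n) (tau : nat -> R) : Prop :=
  (forall k, tau k != 0) /\
  exists gamma : R[i],
    mx_cvg (fun k => evol H (tau k) *m ebasis _ p) (gamma *: ebasis _ p).

End GraphQuantum.

(* Main.v *)
Require Import Defs.
From HB Require Import structures.
From mathcomp Require Import all_boot all_order all_algebra.
From mathcomp Require Import complex.
From mathcomp Require Import all_classical all_reals trigo.
From mathcomp Require Import topology normedtype sequences.
From mathcomp Require Import ring perm zify.
Import Order.TTheory GRing.Theory Num.Theory numFieldNormedType.Exports.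
Local Open Scope complex_scope.
Local Open Scope ring_scope.

Set Implicit Arguments.
Unset Strict Implicit.
Unset Printing Implicit Defensive.

Section Anal.
Local Open Scope classical_set_scope.
Variable R : realType.
Implicit Types z w : R[i].

Definition nc z : R := complex.Re `|z|.

Lemma ncE z : `|z| = (nc z)%:C.
Proof. by rewrite /nc normc_def. Qed.

Lemma nc_lt z e : (`|z| < e%:C) = (nc z < e).
Proof. by rewrite ncE ltcR. Qed.

Lemma nc_ge0 z : 0 <= nc z.
Proof. rewrite -lecR -ncE; exact: normr_ge0. Qed.

Lemma ncD z w : nc (z + w) <= nc z + nc w.
Proof. rewrite -lecR rmorphD /= -!ncE; exact: ler_normD. Qed.

Lemma ncM z w : nc (z * w) = nc z * nc w.
Proof. by apply: complexI; rewrite rmorphM /= -!ncE normrM. Qed.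

Lemma ncN z : nc (- z) = nc z.
Proof. by rewrite /nc normrN. Qed.

Lemma nc_real (x : R) : nc x%:C = `|x|.
Proof. by rewrite /nc normc_def /= expr0n /= addr0 sqrtr_sqr. Qed.

Lemma nc_eq0 z : nc z = 0 -> z = 0.
Proof. by move=> h; apply/eqP; rewrite -normr_eq0 ncE h. Qed.

Lemma nc_Re z : `|complex.Re z| <= nc z.
Proof. by rewrite -lecR -ncE normc_ge_Re. Qed.

Lemma nc_Im z : `|complex.Im z| <= nc z.
Proof. by rewrite /nc normc_def /= -(sqrtr_sqr (complex.Im z)) ler_sqrt ?lerDr ?sqr_ge0 // addr_ge0 ?sqr_ge0. Qed.

Lemma nc_i : nc 'i = 1.
Proof. by rewrite /nc normc_def /= expr0n /= add0r expr1n sqrtr1. Qed.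

Lemma nc_ReIm z : nc z <= `|complex.Re z| + `|complex.Im z|.
Proof.
rewrite {1}[z]complexE; apply: le_trans (ncD _ _) _.
by rewrite ncM nc_i mul1r !nc_real.
Qed.

Lemma nc_sum (I : finType) (F : I -> R[i]) : nc (\sum_i F i) <= \sum_i nc (F i).
Proof.
rewrite -lecR -ncE rmorph_sum /=.
by apply: le_trans (ler_norm_sum _ _ _) _; apply: ler_sum => i _; rewrite ncE.
Qed.

Definition sc (s : nat -> R[i]) (l : R[i]) := forall e : R, 0 < e ->
  exists N : nat, forall k, (N <= k)%N -> nc (s k - l) < e.

Lemma sc_near s l : sc s l <-> forall e : R, 0 < e -> \forall k \near \oo, nc (s k - l) < e.
Proof.
split=> h e /h; first by case=> N HN; exists N.
by case=> N _ HN; exists N.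
Qed.

Lemma mx_cvg_sc m n (u : nat -> 'M[R[i]]_(m, n)) l :
  mx_cvg u l <-> forall i j, sc (fun k => u k i j) (l i j).
Proof.
split.
  move=> h i j e /h [N HN]; exists N => k /HN /(_ i j); by rewrite nc_lt.
move=> h e e0.
have : \forall k \near \oo, forall i j, nc (u k i j - l i j) < e.
  apply: filter_forall => i; apply: filter_forall => j.
  by have /sc_near := h i j; apply.
case=> N _ HN; exists N => k /HN H i j; by rewrite nc_lt.
Qed.

Lemma le0_all (x : R) : (forall e, 0 < e -> x < e) -> x <= 0.
Proof. by move=> h; rewrite leNgt; apply/negP => /h; rewrite ltxx. Qed.

Lemma sc_unique s l1 l2 : sc s l1 -> sc s l2 -> l1 = l2.
Proof.
move=> h1 h2; apply/eqP; rewrite -subr_eq0; apply/eqP/nc_eq0/le_anti.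
rewrite nc_ge0 andbT; apply: le0_all => e e0.
have e2 : 0 < e / 2 by rewrite divr_gt0.
case: (h1 _ e2) => N1 H1; case: (h2 _ e2) => N2 H2.
have := H1 (maxn N1 N2) (leq_maxl _ _); have := H2 (maxn N1 N2) (leq_maxr _ _).
set x := s _ => A B.
have -> : l1 - l2 = (x - l2) - (x - l1) by rewrite opprB [RHS]addrC addrA subrK.
apply: le_lt_trans (ncD _ _) _; rewrite ncN.
by rewrite [e]splitr ltrD.
Qed.

Lemma mx_cvg_unique m n (u : nat -> 'M[R[i]]_(m, n)) l1 l2 :
  mx_cvg u l1 -> mx_cvg u l2 -> l1 = l2.
Proof.
move=> /mx_cvg_sc h1 /mx_cvg_sc h2; apply/matrixP => i j.
exact: sc_unique (h1 i j) (h2 i j).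
Qed.

Lemma sc_const l : sc (fun _ => l) l.
Proof. by move=> e e0; exists 0%N => k _; rewrite subrr /nc normr0 /=. Qed.

Lemma sc_add s t l1 l2 : sc s l1 -> sc t l2 -> sc (fun k => s k + t k) (l1 + l2).
Proof.
move=> h1 h2 e e0.
have e2 : 0 < e / 2 by rewrite divr_gt0.
case: (h1 _ e2) => N1 H1; case: (h2 _ e2) => N2 H2.
exists (maxn N1 N2) => k; rewrite geq_max => /andP[k1 k2].
have -> : s k + t k - (l1 + l2) = (s k - l1) + (t k - l2)
  by rewrite opprD addrACA.
apply: le_lt_trans (ncD _ _) _.
by rewrite [e]splitr ltrD ?H1 ?H2.
Qed.

Lemma sc_mulr s l c : sc s l -> sc (fun k => s k * c) (l * c).
Proof.
move=> h e e0.
have e2 : 0 < e / (nc c + 1) by rewrite divr_gt0 // ltr_wpDl ?nc_ge0.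
case: (h _ e2) => N H; exists N => k /H Hk.
rewrite -mulrBl ncM.
have c1 : 0 < nc c + 1 by rewrite ltr_wpDl ?nc_ge0.
rewrite ltr_pdivlMr // in Hk.
apply: le_lt_trans Hk; rewrite ler_wpM2l ?nc_ge0 // lerDl; exact: ler01.
Qed.

Lemma sc_mull s l c : sc s l -> sc (fun k => c * s k) (c * l).
Proof. by move=> h; rewrite mulrC; under eq_fun do rewrite mulrC; apply: sc_mulr. Qed.

Lemma sc_sum (I : finType) (s : I -> nat -> R[i]) l :
  (forall i, sc (s i) (l i)) -> sc (fun k => \sum_i s i k) (\sum_i l i).
Proof.
move=> h.
suff key : forall r : seq I, sc (fun k => \sum_(i <- r) s i k) (\sum_(i <- r) l i) by apply: key.
elim=> [|i r ih].
  by under eq_fun do rewrite big_nil; rewrite big_nil; apply: sc_const.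
by under eq_fun do rewrite big_cons; rewrite big_cons; apply: sc_add.
Qed.

Lemma sc_ReIm (s : nat -> R[i]) (x y : R) :
  (fun k => complex.Re (s k)) @ \oo --> x ->
  (fun k => complex.Im (s k)) @ \oo --> y -> sc s (x +i* y).
Proof.
move=> /cvgrPdist_lt h1 /cvgrPdist_lt h2; apply/sc_near => e e0.
have e2 : 0 < e / 2 by rewrite divr_gt0.
apply: filterS2 (h1 _ e2) (h2 _ e2) => k H1 H2.
apply: le_lt_trans (nc_ReIm _) _.
have -> : complex.Re (s k - (x +i* y)) = - (x - complex.Re (s k)).
  by case: (s k) => ? ?; rewrite /= opprB addrC.
have -> : complex.Im (s k - (x +i* y)) = - (y - complex.Im (s k)).
  by case: (s k) => ? ?; rewrite /= opprB addrC.
by rewrite !normrN [e]splitr ltrD.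
Qed.

Lemma ReD z w : complex.Re (z + w) = complex.Re z + complex.Re w.
Proof. by case: z; case: w. Qed.
Lemma ImD z w : complex.Im (z + w) = complex.Im z + complex.Im w.
Proof. by case: z; case: w. Qed.

Lemma Re_sum (I : Type) (r : seq I) (P : pred I) (F : I -> R[i]) :
  complex.Re (\sum_(i <- r | P i) F i) = \sum_(i <- r | P i) complex.Re (F i).
Proof.
elim: r => [|x r ih]; rewrite ?big_nil ?big_cons //.
by case: (P x) => //; rewrite ReD ih.
Qed.

Lemma Im_sum (I : Type) (r : seq I) (P : pred I) (F : I -> R[i]) :
  complex.Im (\sum_(i <- r | P i) F i) = \sum_(i <- r | P i) complex.Im (F i).
Proof.
elim: r => [|x r ih]; rewrite ?big_nil ?big_cons //.
by case: (P x) => //; rewrite ImD ih.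
Qed.

Lemma real_abs_cvg (u y : R ^nat) : (forall k, `|u k| <= y k) ->
  cvgn (series y) -> cvgn (series u).
Proof.
move=> h hy; apply: normed_cvg.
apply: (series_le_cvg (fun k => normr_ge0 _) _ h hy).
by move=> k; apply: le_trans (normr_ge0 _) (h k).
Qed.

Definition psum n (A : 'M[R[i]]_n) N := \sum_(k < N) ((k`!)%:R)^-1 *: A ^+ k.
Arguments psum {n} A N.

Lemma nc_natV k : nc ((k%:R : R[i])^-1) = (k%:R)^-1.
Proof.
rewrite -(rmorph_nat (real_complex R)) -fmorphV nc_real ger0_norm //.
by rewrite invr_ge0 ler0n.
Qed.

Lemma le_sum_one (I : finType) (F : I -> R) j : (forall i, 0 <= F i) -> F j <= \sum_i F i.
Proof. by move=> h; rewrite (bigD1 j) //= lerDl sumr_ge0. Qed.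

Lemma pow_bound n (A : 'M[R[i]]_n) k i j :
  nc ((A ^+ k) i j) <= (\sum_l \sum_j' nc (A l j')) ^+ k.
Proof.
set m := (\sum_l \sum_j' nc (A l j')).
have m0 : 0 <= m by apply: sumr_ge0 => l _; apply: sumr_ge0 => j' _; apply: nc_ge0.
elim: k i j => [|k ih] i j.
  rewrite expr0 expr0 mxE; case: (i == j); rewrite /= ?mulr1n ?mulr0n.
    by rewrite /nc normr1.
  by rewrite /nc normr0.
rewrite exprSr -mulmxE mxE.
apply: le_trans (nc_sum _) _.
apply: (@le_trans _ _ (\sum_l m ^+ k * nc (A l j))).
  apply: ler_sum => l _; rewrite ncM; apply: ler_wpM2r; [exact: nc_ge0|exact: ih].
rewrite -mulr_sumr exprSr; apply: ler_wpM2l; first exact: exprn_ge0.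
apply: ler_sum => l _; apply: le_sum_one => j'; exact: nc_ge0.
Qed.

Lemma expmx_ex n (A : 'M[R[i]]_n) : exists E, mx_cvg (psum A) E.
Proof.
set m := (\sum_l \sum_j' nc (A l j')).
set t := fun k => ((k`!)%:R)^-1 *: A ^+ k.
have tb : forall k i j, nc (t k i j) <= exp_coeff m k.
  move=> k i j; rewrite /t mxE ncM nc_natV /exp_coeff /= mulrC.
  by apply: ler_wpM2r; [rewrite invr_ge0 ler0n|exact: pow_bound].
have cRe : forall i j, cvgn (series (fun k => complex.Re (t k i j))).
  move=> i j; apply: (@real_abs_cvg _ (exp_coeff m)); last exact: is_cvg_series_exp_coeff; move=> k.
  exact: le_trans (nc_Re _) (tb k i j).
have cIm : forall i j, cvgn (series (fun k => complex.Im (t k i j))).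
  move=> i j; apply: (@real_abs_cvg _ (exp_coeff m)); last exact: is_cvg_series_exp_coeff; move=> k.
  exact: le_trans (nc_Im _) (tb k i j).
exists (\matrix_(i, j) (limn (series (fun k => complex.Re (t k i j))) +i*
                         limn (series (fun k => complex.Im (t k i j))))).
apply/mx_cvg_sc => i j; rewrite mxE; apply: sc_ReIm.
  have -> : (fun N => complex.Re (psum A N i j)) = series (fun k => complex.Re (t k i j)).
    by apply/funext => N; rewrite /series /= big_mkord /psum summxE Re_sum.
  exact: cRe.
have -> : (fun N => complex.Im (psum A N i j)) = series (fun k => complex.Im (t k i j)).
  by apply/funext => N; rewrite /series /= big_mkord /psum summxE Im_sum.
exact: cIm.
Qed.

Lemma expmx_cvg n (A : 'M[R[i]]_n) : mx_cvg (psum A) (expmx A).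
Proof. rewrite /expmx; exact: (xgetPex 0 (expmx_ex A)). Qed.


Lemma Re_iX k : complex.Re ('i ^+ k : R[i]) = (~~ odd k)%:R * (-1) ^+ k./2 /\
                complex.Im ('i ^+ k : R[i]) = (odd k)%:R * (-1) ^+ k.-1./2.
Proof.
elim: k => [|k [ihR ihI]]; first by rewrite expr0 /= mulr1 mul0r.
rewrite exprSr ReiNIm ImiRe ihR ihI; split; last by rewrite /= .
case: k ihR ihI => [|k] ihR ihI /=; first by rewrite !mul0r oppr0.
by rewrite !negbK exprS mulN1r mulrN.
Qed.

Lemma Re_scal (r : R) z : complex.Re (r%:C * z) = r * complex.Re z.
Proof. by case: z => x y; rewrite /= !mul0r subr0. Qed.
Lemma Im_scal (r : R) z : complex.Im (r%:C * z) = r * complex.Im z.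
Proof. by case: z => x y; rewrite /= !mul0r addr0. Qed.

Definition esum (z : R[i]) N := \sum_(k < N) ((k`!)%:R)^-1 * z ^+ k.

Lemma esum_term (th : R) k : ((k`!)%:R : R[i])^-1 * ('i * th%:C) ^+ k =
  (((k`!)%:R)^-1 * th ^+ k)%:C * 'i ^+ k.
Proof.
rewrite exprMn -rmorphXn -(rmorph_nat (real_complex R)) -fmorphV rmorphM /=.
by rewrite -mulrA [_ * 'i ^+ k]mulrC.
Qed.


Lemma esum_trig th : sc (esum ('i * th%:C)) (cos th +i* sin th).
Proof.
apply: sc_ReIm.
  have -> : (fun N => complex.Re (esum ('i * th%:C) N)) = series (cos_coeff th).
    apply/funext => N; rewrite /series /= big_mkord /esum Re_sum.
    apply: eq_bigr => k _; rewrite esum_term Re_scal (Re_iX k).1 /=.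
    rewrite cos_coeffE; ring.
  rewrite cos.unlock; exact: is_cvg_series_cos_coeff.
have -> : (fun N => complex.Im (esum ('i * th%:C) N)) = series (sin_coeff th).
  apply/funext => N; rewrite /series /= big_mkord /esum Im_sum.
  apply: eq_bigr => k _; rewrite esum_term Im_scal (Re_iX k).2 /=.
  rewrite sin_coeffE; ring.
rewrite sin.unlock; exact: is_cvg_series_sin_coeff.
Qed.


Lemma mx_cvg_mulr m n p (u : nat -> 'M[R[i]]_(m, n)) l (z : 'M[R[i]]_(n, p)) :
  mx_cvg u l -> mx_cvg (fun k => u k *m z) (l *m z).
Proof.
move=> /mx_cvg_sc h; apply/mx_cvg_sc => i j.
under eq_fun do rewrite mxE; rewrite mxE.
apply: sc_sum => l'; apply: sc_mulr; exact: h.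
Qed.

Lemma mx_cvg_scale m n (s : nat -> R[i]) E (z : 'M[R[i]]_(m, n)) :
  sc s E -> mx_cvg (fun k => s k *: z) (E *: z).
Proof.
move=> h; apply/mx_cvg_sc => i j.
under eq_fun do rewrite mxE; rewrite mxE; exact: sc_mulr.
Qed.

Lemma psum_mulr n (Z : 'M[R[i]]_n) (z : 'cV[R[i]]_n) N :
  psum Z N *m z = \sum_(k < N) ((k`!)%:R)^-1 *: (Z ^+ k *m z).
Proof. by rewrite /psum mulmx_suml; apply: eq_bigr => k _; rewrite scalemxAl. Qed.

Lemma expmx_eqv n (Z Z' : 'M[R[i]]_n) (z z' : 'cV[R[i]]_n) :
  (forall k, Z ^+ k *m z = Z' ^+ k *m z') -> expmx Z *m z = expmx Z' *m z'.
Proof.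
move=> h.
have e : (fun N => psum Z N *m z) = (fun N => psum Z' N *m z').
  by apply/funext => N; rewrite !psum_mulr; apply: eq_bigr => k _; rewrite h.
have h1 := mx_cvg_mulr z (expmx_cvg Z).
have h2 := mx_cvg_mulr z' (expmx_cvg Z').
rewrite e in h1; exact: mx_cvg_unique h1 h2.
Qed.

Lemma eig_pow n (Z : 'M[R[i]]_n) (z : 'cV[R[i]]_n) lam k :
  Z *m z = lam *: z -> Z ^+ k *m z = lam ^+ k *: z.
Proof.
move=> h; elim: k => [|k ih]; first by rewrite !expr0 mul1mx scale1r.
by rewrite exprS -mulmxE -mulmxA ih -scalemxAr h scalerA exprSr.
Qed.

Lemma expmx_eig n (Z : 'M[R[i]]_n) (z : 'cV[R[i]]_n) (th : R) :
  Z *m z = ('i * th%:C) *: z -> expmx Z *m z = (cos th +i* sin th) *: z.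
Proof.
move=> h.
have e : (fun N => psum Z N *m z) = (fun N => esum ('i * th%:C) N *: z).
  apply/funext => N; rewrite psum_mulr /esum scaler_suml; apply: eq_bigr => k _.
  by rewrite (eig_pow _ h) scalerA.
have h1 := mx_cvg_mulr z (expmx_cvg Z).
rewrite e in h1; exact: mx_cvg_unique h1 (mx_cvg_scale z (esum_trig th)).
Qed.

Lemma comm_pow n (X Mc : 'M[R[i]]_n) k : Mc *m X = X *m Mc -> Mc *m X ^+ k = X ^+ k *m Mc.
Proof.
move=> h; elim: k => [|k ih]; first by rewrite expr0 mulmx1 mul1mx.
by rewrite exprS -mulmxE mulmxA h -mulmxA ih mulmxA.
Qed.

Lemma pert_pow n (X Mc : 'M[R[i]]_n) (z : 'cV[R[i]]_n) beta k :
  Mc *m X = X *m Mc -> Mc *m z = 0 -> (X + beta *: Mc) ^+ k *m z = X ^+ k *m z.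
Proof.
move=> hc hz; elim: k => [|k ih]; first by rewrite !expr0.
rewrite exprS -mulmxE -mulmxA ih mulmxDl -scalemxAl [Mc *m _]mulmxA (comm_pow k hc).
by rewrite -[X ^+ k *m Mc *m z]mulmxA hz mulmx0 scaler0 addr0 mulmxA mulmxE -exprS.
Qed.

Definition permx n (s : {perm 'I_n}) (A : 'M[R[i]]_n) := \matrix_(i, j) A (s i) (s j).

Lemma permxM n s (A B : 'M[R[i]]_n) : permx s (A * B) = permx s A * permx s B.
Proof.
apply/matrixP => i j; rewrite -!mulmxE !mxE (reindex_inj (@perm_inj _ s)) /=.
by apply: eq_bigr => l _; rewrite !mxE.
Qed.

Lemma permx1 n s : permx s (1 : 'M[R[i]]_n) = 1.
Proof. by apply/matrixP => i j; rewrite !mxE (inj_eq (@perm_inj _ s)). Qed.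

Lemma permxX n s (A : 'M[R[i]]_n) k : permx s (A ^+ k) = permx s A ^+ k.
Proof.
elim: k => [|k ih]; first by rewrite !expr0 permx1.
by rewrite !exprS permxM ih.
Qed.

Lemma permx_psum n s (A : 'M[R[i]]_n) N : permx s (psum A N) = psum (permx s A) N.
Proof.
apply/matrixP => i j; rewrite mxE /psum !summxE; apply: eq_bigr => k _.
by rewrite -permxX !mxE.
Qed.

Lemma permx_expmx n s (A : 'M[R[i]]_n) : permx s A = A -> permx s (expmx A) = expmx A.
Proof.
move=> h.
have h1 : mx_cvg (fun N => permx s (psum A N)) (permx s (expmx A)).
  have := expmx_cvg A; move=> /mx_cvg_sc H; apply/mx_cvg_sc => i j.
  under eq_fun do rewrite mxE; rewrite mxE; exact: H.
have e : (fun N => permx s (psum A N)) = psum A by apply/funext => N; rewrite permx_psum h.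
rewrite e in h1.
exact: mx_cvg_unique h1 (expmx_cvg A).
Qed.

End Anal.

Set Implicit Arguments.
Unset Strict Implicit.
Unset Printing Implicit Defensive.

Lemma mxB_e (K : pzRingType) m p (A B : 'M[K]_(m, p)) i j : (A - B) i j = A i j - B i j.
Proof. by rewrite !mxE. Qed.
Lemma mxD_e (K : pzRingType) m p (A B : 'M[K]_(m, p)) i j : (A + B) i j = A i j + B i j.
Proof. by rewrite !mxE. Qed.
Lemma mxZ_e (K : pzRingType) m p (c : K) (A : 'M[K]_(m, p)) i j : (c *: A) i j = c * A i j.
Proof. by rewrite !mxE. Qed.
Lemma col_e (K : pzRingType) m p (A : 'M[K]_(m, p)) j i (k : 'I_1) : col j A i k = A i j.
Proof. by rewrite !mxE. Qed.
Lemma tr_e (K : pzRingType) m p (A : 'M[K]_(m, p)) i j : A^T i j = A j i.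
Proof. by rewrite !mxE. Qed.

Lemma alt_sub (R : realType) (f : R -> R) x N : alternating f pi ->
  f (x - pi *+ N) = (-1) ^+ N * f x.
Proof.
move=> h; have := alternatingn h N (x - pi *+ N); rewrite subrK => ->.
by rewrite -signr_odd mulrA -signr_addb addbb expr0 mul1r.
Qed.

Lemma alt_odd (R : realType) (f : R -> R) x (m : int) : alternating f pi ->
  f (x - pi * (2 * m%:~R + 1)) = - f x.
Proof.
move=> h.
have -> : (2 * m%:~R + 1 : R) = (2 * m + 1)%:~R by rewrite rmorphD rmorphM /= rmorph1.
case: m => k.
  have -> : (2 * Posz k + 1 = Posz (2 * k)%N.+1)%R by lia.
  rewrite -[(Posz _)%:~R]/(((2 * k)%N.+1)%:R : R) mulr_natr alt_sub //.
  by rewrite -signr_odd /= oddM /= mulN1r.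
have -> : (2 * Negz k + 1 = - Posz (2 * k)%N.+1)%R by rewrite NegzE; lia.
rewrite rmorphN /= -[(Posz _)%:~R]/(((2 * k)%N.+1)%:R : R) mulrN opprK mulr_natr.
by rewrite alternatingn // -signr_odd /= oddM /= mulN1r.
Qed.

Lemma oppcE (R : realType) (x y : R) : - (x +i* y) = (- x) +i* (- y) :> R[i].
Proof. by []. Qed.

Lemma Ec_shift (R : realType) (th : R) (m : int) :
 (cos (th - pi * (2 * m%:~R + 1)) +i* sin (th - pi * (2 * m%:~R + 1))) =  - (cos th +i* sin th).
Proof.
rewrite (alt_odd _ _ (@cosDpi R)) (alt_odd _ _ (@sinDpi R)) oppcE.
reflexivity.
Qed.

Lemma combine (K : fieldType) n (U U' : 'M[K]_n) (w v ea eb : 'cV[K]_n) (E : K) :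
  ea = 2%:R^-1 *: (w + v) -> eb = 2%:R^-1 *: (w - v) -> U' *m w = U *m w ->
  U' *m v = (- E) *: v -> U *m v = E *: v -> U' *m ea = U *m eb.
Proof.
move=> -> -> hw hY hX.
by rewrite -!scalemxAr mulmxDr mulmxBr hw hY hX scaleNr.
Qed.

Section Graph.
Variable R : realType.
Variables (n : nat) (adj : rel 'I_n) (a b : 'I_n).
Hypothesis sym : forall i j, adj i j = adj j i.
Hypothesis irr : forall i, adj i i = false.
Hypothesis ab : a != b.
Hypothesis tw : nbhd adj a :\ b = nbhd adj b :\ a.

Local Notation L := (laplacian R adj).
Definition deg i := #|nbhd adj i|.

Lemma twin w : w != a -> w != b -> adj a w = adj b w.
Proof.
move=> wa wb; have : (w \in nbhd adj a :\ b) = (w \in nbhd adj b :\ a) by rewrite tw.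
by rewrite !in_setD1 !inE wa wb.
Qed.

Lemma deg_ab : deg a = deg b.
Proof.
rewrite /deg (cardsD1 b) (cardsD1 a (nbhd adj b)) tw !inE sym.
by [].
Qed.

Lemma Lij i j : L i j = (i == j)%:R * (deg i)%:R - (adj i j)%:R.
Proof. by rewrite mxE. Qed.

Lemma L_sym i j : L i j = L j i.
Proof.
rewrite !Lij eq_sym sym; have [->|_] := eqVneq j i => //.
by rewrite !mul0r.
Qed.

Definition sw := tperm a b.

Lemma adj_perm i j : adj (sw i) (sw j) = adj i j.
Proof.
rewrite /sw.
case: (tpermP a b i) => [->|->|/eqP ia /eqP ib];
case: (tpermP a b j) => [->|->|/eqP ja /eqP jb];
rewrite ?irr // ?[adj b a]sym // ?(twin ja jb) // ?[adj j _]sym ?[adj i _]sym ?(twin ia ib) //.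
Qed.


Lemma deg_perm i : deg (sw i) = deg i.
Proof.
rewrite /sw; case: (tpermP a b i) => [->|->|_ _] //; by rewrite deg_ab.
Qed.

Lemma L_perm i j : L (sw i) (sw j) = L i j.
Proof. by rewrite !Lij adj_perm deg_perm (inj_eq (@perm_inj _ sw)). Qed.

Definition mu : R := (deg a)%:R + (adj a b)%:R.

Lemma L_v i : L i a - L i b = mu * ((i == a)%:R - (i == b)%:R).
Proof.
rewrite /mu !Lij.
have [->|ia] := eqVneq i a.
  rewrite (negPf ab) irr /=; ring.
have [->|ib] := eqVneq i b.
  rewrite irr [adj b a]sym -deg_ab /=; ring.
rewrite [adj i a]sym [adj i b]sym twin //=; ring.
Qed.


Definition Lc : 'M[R[i]]_n := map_mx (fun x : R => x%:C) L.
Definition ec (j : 'I_n) : 'cV[R[i]]_n := ebasis R[i] j.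
Definition vc := ec a - ec b.
Definition wc := ec a + ec b.
Definition Mr : 'M[R]_n := (ebasis R a - ebasis R b) *m (ebasis R a - ebasis R b)^T.
Definition Mc : 'M[R[i]]_n := map_mx (fun x : R => x%:C) Mr.
Definition Xc (t : R) := (- 'i * t%:C) *: Lc.

Lemma eb_entry (K : pzRingType) (j i : 'I_n) (k : 'I_1) : ebasis K j i k = (i == j)%:R.
Proof. by rewrite /ebasis mxE [k]ord1 eqxx andbT. Qed.

Lemma ec_entry j i (k : 'I_1) : ec j i k = (i == j)%:R.
Proof. by rewrite /ec /ebasis mxE [k]ord1 eqxx andbT. Qed.

Lemma mulmx_ec m (A : 'M[R[i]]_(m, n)) j : A *m ec j = col j A.
Proof. by rewrite /ec /ebasis colE. Qed.

Lemma vc_entry i (k : 'I_1) : vc i k = (i == a)%:R - (i == b)%:R.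
Proof. by rewrite [k]ord1 /vc /ec /ebasis !mxE !eqxx !andbT. Qed.

Lemma Mc_eq : Mc = vc *m vc^T.
Proof.
apply/matrixP => i j; rewrite !mxE !big_ord1 ![(_^T) _ _]mxE !vc_entry.
rewrite ![(ebasis R a - ebasis R b) _ _]mxE ![(- ebasis R b) _ _]mxE !eb_entry.
by rewrite rmorphM rmorphB rmorphB /= !rmorph_nat.
Qed.

Lemma Lc_entry i j : Lc i j = (L i j)%:C.
Proof. by rewrite /Lc mxE. Qed.

Lemma Xc_entry t i j : Xc t i j = (- 'i * t%:C) * (L i j)%:C.
Proof. by rewrite /Xc mxE Lc_entry. Qed.

Lemma Mc_entry i j : Mc i j = (Mr i j)%:C.
Proof. by rewrite /Mc mxE. Qed.

Lemma Xc_sym t : (Xc t)^T = Xc t.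
Proof. by apply/matrixP => i j; rewrite mxE !Xc_entry L_sym. Qed.

Lemma Xc_v t : Xc t *m vc = (- 'i * t%:C * mu%:C) *: vc.
Proof.
have -> : Xc t *m vc = col a (Xc t) - col b (Xc t) by rewrite /vc mulmxBr !mulmx_ec.
apply/matrixP => i k; rewrite [RHS]mxZ_e vc_entry mxB_e !col_e !Xc_entry.
rewrite -mulrBr -rmorphB L_v rmorphM rmorphB /= !rmorph_nat.
by rewrite mulrA.
Qed.

Lemma Mc_comm t : Mc *m Xc t = Xc t *m Mc.
Proof.
have h : vc^T *m Xc t = (Xc t *m vc)^T by rewrite trmx_mul Xc_sym.
rewrite Mc_eq -mulmxA h Xc_v linearZ /= -scalemxAr mulmxA Xc_v scalemxAl.
by [].
Qed.

Lemma Mc_v : Mc *m vc = 2%:R *: vc.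
Proof.
rewrite Mc_eq -mulmxA.
have -> : vc^T *m vc = (2%:R : R[i])%:M.
  have -> : vc^T *m vc = col a vc^T - col b vc^T by rewrite {2}/vc mulmxBr !mulmx_ec.
  apply/matrixP => x y; rewrite [x]ord1 [y]ord1 mxB_e !col_e !tr_e !vc_entry mxE.
  rewrite !eqxx (negPf ab) eq_sym (negPf ab) /= mulr1n; ring.
by rewrite -scalemx1 -scalemxAr mulmx1.
Qed.

Lemma Mc_e p : p != a -> p != b -> Mc *m ec p = 0.
Proof.
move=> pa pb; rewrite Mc_eq -mulmxA mulmx_ec.
have -> : col p vc^T = 0.
  by apply/matrixP => i j; rewrite col_e tr_e vc_entry (negPf pa) (negPf pb) mxE subrr.
by rewrite mulmx0.
Qed.

Lemma Mc_w : Mc *m wc = 0.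
Proof.
rewrite Mc_eq -mulmxA /wc mulmxDr !mulmx_ec.
have -> : col a vc^T + col b vc^T = 0.
  apply/matrixP => i j; rewrite mxD_e !col_e !tr_e !vc_entry mxE.
  rewrite !eqxx (negPf ab) eq_sym (negPf ab) /=; ring.
by rewrite mulmx0.
Qed.

Lemma Xc_perm t : permx sw (Xc t) = Xc t.
Proof. by apply/matrixP => i j; rewrite mxE !Xc_entry L_perm. Qed.


Definition Ec (th : R) : R[i] := cos th +i* sin th.

Lemma Yc_eq t (al : R) : (- 'i * t%:C) *: map_mx (fun x : R => x%:C) (L + al *: Mr) =
  Xc t + (- 'i * t%:C * al%:C) *: Mc.
Proof.
apply/matrixP => i j; rewrite [LHS]mxZ_e [map_mx _ _ _ _]mxE mxD_e mxZ_e.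
rewrite [RHS]mxD_e Xc_entry mxZ_e Mc_entry rmorphD rmorphM /=; ring.
Qed.

Lemma evolL t : evol L t = expmx (Xc t).
Proof. by []. Qed.

Lemma evolLa t al : evol (L + al *: Mr) t = expmx (Xc t + (- 'i * t%:C * al%:C) *: Mc).
Proof. by rewrite /evol Yc_eq. Qed.

Lemma P2 t al p : p != a -> p != b -> evol (L + al *: Mr) t *m ec p = evol L t *m ec p.
Proof.
move=> pa pb; rewrite evolLa evolL; apply: expmx_eqv => k.
exact: pert_pow (Mc_comm t) (Mc_e pa pb).
Qed.

Lemma ea_eq : ec a = 2%:R^-1 *: (wc + vc).
Proof.
rewrite /wc /vc addrACA subrr addr0 (_ : ec a + ec a = 2%:R *: ec a).
  by rewrite scalerA mulVf ?scale1r // pnatr_eq0.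
by rewrite scaler_nat mulr2n.
Qed.

Lemma eb_eq : ec b = 2%:R^-1 *: (wc - vc).
Proof.
rewrite /wc /vc opprB [ec b - ec a]addrC addrACA subrr add0r (_ : ec b + ec b = 2%:R *: ec b).
  by rewrite scalerA mulVf ?scale1r // pnatr_eq0.
by rewrite scaler_nat mulr2n.
Qed.

Lemma P1 t al (m : int) : 2 * al * t = pi * (2 * m%:~R + 1) ->
  evol (L + al *: Mr) t *m ec a = evol L t *m ec b.
Proof.
move=> h; rewrite evolLa evolL.
set Y := _ + _ *: Mc.
set th := - (t * mu).
have hXv : Xc t *m vc = ('i * th%:C) *: vc.
  by rewrite Xc_v /th; congr (_ *: _); rewrite rmorphN rmorphM /=; ring.
have hYv : Y *m vc = ('i * (th - pi * (2 * m%:~R + 1))%:C) *: vc.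
  rewrite /Y mulmxDl -scalemxAl Xc_v Mc_v scalerA -scalerDl; congr (_ *: _).
  rewrite -h /th rmorphB rmorphN !rmorphM /= rmorph_nat; ring.
have hw : expmx Y *m wc = expmx (Xc t) *m wc.
  apply: expmx_eqv => k; exact: pert_pow (Mc_comm t) Mc_w.
have hY := expmx_eig hYv; have hX := expmx_eig hXv.
have EY := Ec_shift th m.
rewrite EY in hY.
exact: (combine ea_eq eb_eq hw hY hX).
Qed.

Lemma U_perm t x j : evol L t x j = evol L t (sw x) (sw j).
Proof.
rewrite evolL; have := permx_expmx (Xc_perm t) => e.
by rewrite -{1}e mxE.
Qed.

End Graph.

Unset Implicit Arguments.

Theorem theorem3p2 (R : realType) (n : nat) (adj : rel 'I_n)
    (a b p : 'I_n) (alpha : R) (tau : nat -> R) :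
  simple_graph adj -> connected_graph adj ->
  a != b ->
  nbhd adj a :\ b = nbhd adj b :\ a ->
  let L := laplacian R adj in
  let M := (ebasis R a - ebasis R b) *m (ebasis R a - ebasis R b)^T in
  let La := L + alpha *: M in
  almost_periodic L p tau ->
  ((p \in [:: a; b]) ->
     (forall k, exists m : int, 2 * alpha * tau k = pi * (2 * m%:~R + 1)) ->
     pgst La a b tau) /\
  ((p \notin [:: a; b]) -> almost_periodic La p tau).
Proof.
move=> [sym irr] _ ab tw L M La [tau0 [g hg]].
rewrite /La /M /L in hg *.
split.
  move=> pab hm; split => //; exists g.
  have key : (fun k => evol (laplacian R adj + alpha *: Mr R a b) (tau k) *m ebasis R[i] a)
           = (fun k => evol (laplacian R adj) (tau k) *m ebasis R[i] b).
    apply/funext => k; have [m hm'] := hm k.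
    exact: (P1 sym irr ab tw hm').
  rewrite -/(Mr R a b) key.
  move: pab; rewrite !inE => /orP[/eqP pa|/eqP pb]; last by rewrite -pb.
  rewrite pa in hg.
  apply/mx_cvg_sc => x y; move/mx_cvg_sc: hg => /(_ (sw a b x) y) hg.
  have e1 : (fun k => (evol (laplacian R adj) (tau k) *m ebasis R[i] b) x y) =
            (fun k => (evol (laplacian R adj) (tau k) *m ebasis R[i] a) (sw a b x) y).
    apply/funext => k; rewrite -/(ec R a) -/(ec R b) !mulmx_ec !col_e.
    by rewrite (U_perm sym irr tw) /sw tpermR.
  have e2 : (g *: ebasis R[i] b) x y = (g *: ebasis R[i] a) (sw a b x) y.
    rewrite !mxZ_e !eb_entry; congr (_ * _%:R).
    by rewrite /sw (canF_eq (tpermK a b)) tpermL.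
  by rewrite e1 e2.
move=> pn; split => //; exists g.
move: pn; rewrite !inE negb_or => /andP[pa pb].
have key : (fun k => evol (laplacian R adj + alpha *: Mr R a b) (tau k) *m ebasis R[i] p)
         = (fun k => evol (laplacian R adj) (tau k) *m ebasis R[i] p).
  apply/funext => k; exact: (P2 sym irr ab tw _ _ pa pb).
by rewrite -/(Mr R a b) key.
Qed.
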